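(* Let $\delta=\delta_1^{x_1}\cdots\delta_n^{x_n}$ with distinct primes $\delta_i$, and let $f$ be a function on $2\times2$ rational matrices. Writing elements of $\mathbb{M}_\delta$ as $A=\begin{pmatrix} n_1&l_1\\ n_2&\tfrac1\delta l_2\end{pmatrix}$, it holds, at least as a formal sum, $$\sum_{\substack{A\in\mathbb{M}_\delta,\ A\neq0,\ \det A=0\\ \delta_1\nmid l_2\,\wedge\dots\wedge\,\delta_n\nmid l_2}}f(A)=\frac12\sum_{l=0}^{n}(-1)^l\sum_{\delta^{(l)}\in\mathcal{C}_l(\delta)}\ \sum_{\substack{j,p\in\mathbb{Z}\\ (j,p)\neq(0,0)}}\ \sum_{P\in\Gamma_0(\delta)/\langle T\rangle}f\left(\begin{pmatrix}0&j\\0&\frac{\delta^{(l)}}{\delta}p\end{pmatrix}\cdot P\right).$$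
   Context: $\mathbb{M}_\delta=\{\begin{pmatrix} n_1&l_1\\ n_2&\tfrac1\delta l_2\end{pmatrix}: n_1,n_2,l_1,l_2\in\mathbb{Z}\}$. $\Gamma_0(\delta)=\{\begin{pmatrix}a&b\\ \delta c&d\end{pmatrix}\in\mathrm{SL}(2,\mathbb{Z})\}$, $T=\begin{pmatrix}1&1\\0&1\end{pmatrix}$, and $\Gamma_0(\delta)/\langle T\rangle$ is the set of classes of $\Gamma_0(\delta)$ under $P_1\sim P_2\iff P_1=T^mP_2$ for some $m\in\mathbb{Z}$ (the sum runs over one representative per class). $\mathcal{C}_l(\delta)$ is the set of all products of $l$ distinct prime factors of $\delta$, with $\mathcal{C}_0(\delta)=\{1\}$. *)

(* Defs.v *)
From HB Require Import structures.
From mathcomp Require Import all_boot all_order all_algebra.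
From mathcomp Require Import boolp classical_sets cardinality fsbigop.
Set Implicit Arguments. Unset Strict Implicit. Unset Printing Implicit Defensive.
Import Order.TTheory GRing.Theory Num.Theory.
Local Open Scope ring_scope.
Local Open Scope classical_set_scope.

Definition mx22 (R : Type) (a b c d : R) : 'M[R]_2 :=
  \matrix_(i < 2, j < 2)
    if i == 0 :> nat then (if j == 0 :> nat then a else b)
    else (if j == 0 :> nat then c else d).

Definition Mdelta_elt (delta : nat) (n1 l1 n2 l2 : int) : 'M[rat]_2 :=
  mx22 (n1%:~R) (l1%:~R) (n2%:~R) (l2%:~R / delta%:R).

Definition Gamma0 (delta : nat) : set 'M[int]_2 :=
  [set P : 'M[int]_2 | \det P = 1 /\ (delta%:Z %| P ord_max ord0)%Z].

Definition Tmat : 'M[int]_2 := mx22 1 1 0 1.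

(* Rep is a set of representatives of Gamma_0(delta)/<T>, where
   P1 ~ P2 iff P1 = T^m P2 for some integer m: exactly one per class. *)
Definition T_transversal (delta : nat) (Rep : set 'M[int]_2) : Prop :=
  Rep `<=` Gamma0 delta /\
  forall P, Gamma0 delta P ->
    exists! Q, Rep Q /\ exists m : int, P = Tmat ^ m *m Q.

Definition Cl (n : nat) (ds : 'I_n -> nat) (l : nat) : set nat :=
  [set d | exists I : {set 'I_n}, #|I| = l /\ d = (\prod_(i in I) ds i)%N].

Definition delta_of (n : nat) (ds : 'I_n -> nat) (x : 'I_n -> nat) : nat :=
  (\prod_(i < n) ds i ^ x i)%N.

Definition lhs_set (n : nat) (ds : 'I_n -> nat) (delta : nat) : set 'M[rat]_2 :=
  [set A | exists n1 l1 n2 l2 : int,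
     A = Mdelta_elt delta n1 l1 n2 l2 /\ A != 0 /\ \det A = 0 /\
     forall i : 'I_n, ~~ ((ds i)%:Z %| l2)%Z].

Definition Bmat (delta d : nat) (j p : int) : 'M[rat]_2 :=
  mx22 0 (j%:~R) 0 (d%:R / delta%:R * p%:~R).

Definition rhs_idx (Rep : set 'M[int]_2) : set (int * int * 'M[int]_2) :=
  [set x | (x.1.1, x.1.2) != (0, 0) /\ Rep x.2].

(* Main.v *)
Require Import Defs.
From HB Require Import structures.
From mathcomp Require Import all_boot all_order all_algebra.
From mathcomp Require Import boolp classical_sets cardinality fsbigop.
From mathcomp Require Import finmap functions.
From mathcomp Require Import ring zify.
Import Order.TTheory GRing.Theory Num.Theory.
Set Implicit Arguments. Unset Strict Implicit. Unset Printing Implicit Defensive.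
Local Open Scope ring_scope.
Local Open Scope classical_set_scope.

Lemma mx22E (R : Type) (a b c d : R) (i j : 'I_2) :
  mx22 a b c d i j = if i == 0 :> nat then (if j == 0 :> nat then a else b)
    else (if j == 0 :> nat then c else d).
Proof. by rewrite mxE. Qed.

Lemma mx22_eta (R : Type) (M : 'M[R]_2) :
  M = mx22 (M ord0 ord0) (M ord0 ord_max) (M ord_max ord0) (M ord_max ord_max).
Proof.
apply/matrixP => i j; rewrite mxE.
by case: i => [[|[|i]] Hi] //; case: j => [[|[|j]] Hj] //=; congr (M _ _); apply: val_inj.
Qed.

Lemma mx22_inj (R : Type) (a b c d a' b' c' d' : R) :
  mx22 a b c d = mx22 a' b' c' d' -> [/\ a = a', b = b', c = c' & d = d'].
Proof.
move=> /matrixP H.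
have := H ord0 ord0; have := H ord0 ord_max; have := H ord_max ord0; have := H ord_max ord_max.
by rewrite !mxE /=.
Qed.

Lemma mul_mx22 (R : pzRingType) (a b c d a' b' c' d' : R) :
  mx22 a b c d *m mx22 a' b' c' d' =
  mx22 (a * a' + b * c') (a * b' + b * d') (c * a' + d * c') (c * b' + d * d').
Proof.
apply/matrixP => i j; rewrite !mxE !big_ord_recl big_ord0 !mxE /=.
by case: i => [[|[|i]] Hi] //=; case: j => [[|[|j]] Hj] //=; rewrite addr0.
Qed.

Lemma det_mx22 (R : comPzRingType) (a b c d : R) :
  \det (mx22 a b c d) = a * d - b * c.
Proof.
rewrite (expand_det_row _ ord0) !big_ord_recl big_ord0 /cofactor !det_mx11 !mxE /=.
by rewrite /bump /= expr0 expr1 mul1r mulN1r addr0 mulrN.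
Qed.
Lemma map_mx22 (R S : Type) (g : R -> S) (a b c d : R) :
  map_mx g (mx22 a b c d) = mx22 (g a) (g b) (g c) (g d).
Proof.
apply/matrixP => i j; rewrite !mxE.
by case: i => [[|[|i]] Hi] //; case: j => [[|[|j]] Hj].
Qed.

Lemma mx22_eq0 (R : nmodType) (a b c d : R) :
  (mx22 a b c d == 0) = [&& a == 0, b == 0, c == 0 & d == 0].
Proof.
apply/eqP/idP => [/(congr1 (fun M : 'M_2 => [:: M ord0 ord0; M ord0 ord_max; M ord_max ord0; M ord_max ord_max]))|].
  by rewrite !mxE /= => -[-> -> -> ->]; rewrite !eqxx.
case/and4P => /eqP-> /eqP-> /eqP-> /eqP->; apply/matrixP => i j; rewrite !mxE.
by case: ifP; case: ifP.
Qed.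

Lemma Tpow_nat (k : nat) : Tmat ^+ k = mx22 1 k%:Z 0 1.
Proof.
elim: k => [|k IH].
  by rewrite expr0; apply/matrixP => i j; rewrite !mxE; case: i => [[|[|i]] Hi] //=; case: j => [[|[|j]] Hj].
rewrite exprS IH -mulmxE /Tmat mul_mx22.
congr mx22; rewrite ?mulr0 ?mulr1 ?mul0r ?mul1r ?addr0 ?add0r //.
by rewrite -addn1 PoszD addrC.
Qed.

Lemma Tpow (m : int) : Tmat ^ m = mx22 1 m 0 1.
Proof.
case: m => k; first exact: Tpow_nat.
have -> : Tmat ^ (Negz k) = (Tmat ^+ k.+1)^-1 by [].
rewrite Tpow_nat.
set X := mx22 _ _ _ _; set Y := mx22 _ _ _ _.
have XY : X * Y = 1.
  rewrite -mulmxE mul_mx22; apply/matrixP => i j; rewrite !mxE.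
  case: i => [[|[|i]] Hi] //=; case: j => [[|[|j]] Hj] //=; rewrite ?mulr0 ?mulr1 ?mul0r ?mul1r ?addr0 ?add0r //.
  by rewrite NegzE subrr.
have YX : Y * X = 1.
  rewrite -mulmxE mul_mx22; apply/matrixP => i j; rewrite !mxE.
  case: i => [[|[|i]] Hi] //=; case: j => [[|[|j]] Hj] //=; rewrite ?mulr0 ?mulr1 ?mul0r ?mul1r ?addr0 ?add0r //.
  by rewrite NegzE addrC subrr.
have Xu : X \is a GRing.unit by apply/unitrP; exists Y.
by rewrite -[LHS]mulr1 -XY mulKr.
Qed.
Lemma unit_int (l m : int) : l * m = 1 -> l = 1 \/ l = -1.
Proof.
move=> h; have := congr1 absz h; rewrite abszM /= => /eqP; rewrite muln_eq1 => /andP[/eqP h1 _].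
lia.
Qed.

Lemma coprime_nz (c e : int) : coprimez c e -> (c != 0) || (e != 0).
Proof.
apply: contraLR; rewrite negb_or !negbK => /andP[/eqP-> /eqP->].
by rewrite /coprimez gcdz0.
Qed.

Lemma coprime_of_det (a b c e : int) : a * e - b * c = 1 -> coprimez c e.
Proof. move=> h; apply/coprimezP; exists (- b, a) => /=; lia. Qed.

Lemma prop_vec (c e c' e' : int) : coprimez c e -> coprimez c' e' ->
  c * e' = e * c' -> exists l : int, (l = 1 \/ l = -1) /\ c' = l * c /\ e' = l * e.
Proof.
move=> huvc /coprimezP[[u' v'] /= huv']; move: (huvc) => /coprimezP[[u v] /= huv] h.
exists (u * c' + v * e').
have h1 : c' = (u * c' + v * e') * c.
  rewrite -[c' in LHS]mul1r -huv; apply/eqP; rewrite -subr_eq0; apply/eqP.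
  transitivity (v * (e * c' - c * e')); first by ring.
  by rewrite h subrr mulr0.
have h2 : e' = (u * c' + v * e') * e.
  rewrite -[e' in LHS]mul1r -huv; apply/eqP; rewrite -subr_eq0; apply/eqP.
  transitivity (u * (c * e' - e * c')); first by ring.
  by rewrite h subrr mulr0.
have h3 : c = (u' * c + v' * e) * c'.
  rewrite -[c in LHS]mul1r -huv'; apply/eqP; rewrite -subr_eq0; apply/eqP.
  transitivity (v' * (e' * c - c' * e)); first by ring.
  by rewrite [e' * c]mulrC h [c' * e]mulrC subrr mulr0.
have h4 : e = (u' * c + v' * e) * e'.
  rewrite -[e in LHS]mul1r -huv'; apply/eqP; rewrite -subr_eq0; apply/eqP.
  transitivity (u' * (c' * e - e' * c)); first by ring.
  by rewrite [e' * c]mulrC h [c' * e]mulrC subrr mulr0.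
split=> //; apply: (@unit_int _ (u' * c + v' * e)).
have /orP[c0|e0] := coprime_nz huvc.
  apply: (mulIf c0); rewrite mul1r [in RHS]h3 [in RHS]h1; ring.
apply: (mulIf e0); rewrite mul1r [in RHS]h4 [in RHS]h2; ring.
Qed.

Lemma scal_uniq (a a' c e l : int) : (c != 0) || (e != 0) -> l * l = 1 ->
  a * c = a' * (l * c) -> a * e = a' * (l * e) -> a' = l * a.
Proof.
move=> ce ll h1 h2.
suff -> : a = a' * l by rewrite mulrCA ll mulr1.
case/orP: ce => [c0|e0].
  by apply: (mulIf c0); rewrite h1 mulrA.
by apply: (mulIf e0); rewrite h2 mulrA.
Qed.

Lemma cross_of (a a' c e c' e' : int) : a != 0 ->
  a * c = a' * c' -> a * e = a' * e' -> c * e' = e * c'.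
Proof.
move=> a0 h1 h2; apply: (mulfI a0).
rewrite /= !mulrA h1 h2; ring.
Qed.

Lemma dec_uniq_int (j q c e j' q' c' e' : int) : coprimez c e -> coprimez c' e' ->
  (j != 0) || (q != 0) -> j * c = j' * c' -> j * e = j' * e' ->
  q * c = q' * c' -> q * e = q' * e' ->
  exists l : int, [/\ l = 1 \/ l = -1, c' = l * c, e' = l * e, j' = l * j & q' = l * q].
Proof.
move=> ce ce' jq h1 h2 h3 h4.
have cr : c * e' = e * c'.
  by case/orP: jq => [j0|q0]; [apply: (cross_of j0 h1 h2) | apply: (cross_of q0 h3 h4)].
have [l [l1 [hc he]]] := prop_vec ce ce' cr.
have ll : l * l = 1 by case: l1 => ->.
have cnz := coprime_nz ce.
exists l; split => //.
- by apply: (scal_uniq cnz ll); rewrite -?hc -?he.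
- by apply: (scal_uniq cnz ll); rewrite -?hc -?he.
Qed.

Lemma rank1_aux (a b c' d' : int) : (a != 0) || (b != 0) -> a * d' = b * c' ->
  exists j q c e, [/\ coprimez c e, a = j * c, b = j * e, c' = q * c & d' = q * e].
Proof.
move=> ab h.
have [u [v huv]] := Bezoutz a b.
set g := gcdz a b in huv *.
have g0 : g != 0 by rewrite gcdz_eq0 negb_and.
set c := (a %/ g)%Z; set e := (b %/ g)%Z.
have ha : a = c * g by rewrite divzK // dvdz_gcdl.
have hb : b = e * g by rewrite divzK // dvdz_gcdr.
have ce1 : u * c + v * e = 1.
  apply: (mulIf g0); rewrite mul1r -[g in RHS]huv [in RHS]ha [in RHS]hb; ring.
have cr : c * d' = e * c'.
  apply: (mulIf g0); rewrite [c * d']mulrC [e * c']mulrC -!mulrA -ha -hb mulrC h mulrC //.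
exists g, (u * c' + v * d'), c, e; split.
- by apply/coprimezP; exists (u, v).
- by rewrite mulrC.
- by rewrite mulrC.
- rewrite -[c' in LHS]mul1r -ce1; apply/eqP; rewrite -subr_eq0; apply/eqP.
  transitivity (v * (e * c' - c * d')); first by ring.
  by rewrite cr subrr mulr0.
- rewrite -[d' in LHS]mul1r -ce1; apply/eqP; rewrite -subr_eq0; apply/eqP.
  transitivity (u * (c * d' - e * c')); first by ring.
  by rewrite cr subrr mulr0.
Qed.

Lemma rank1_int (a b c' d' : int) : a * d' = b * c' ->
  [|| a != 0, b != 0, c' != 0 | d' != 0] ->
  exists j q c e, [/\ coprimez c e, a = j * c, b = j * e, c' = q * c & d' = q * e].
Proof.
move=> h nz.
have [ab|] := boolP ((a != 0) || (b != 0)); first exact: rank1_aux.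
rewrite negb_or !negbK => /andP[/eqP a0 /eqP b0].
have cd : (c' != 0) || (d' != 0) by move: nz; rewrite a0 b0 eqxx.
have z : c' * 0 = d' * 0 by rewrite !mulr0.
have [j [q [c [e [H1 H2 H3 H4 H5]]]]] := rank1_aux cd z.
exists 0, j, c, e; split => //; by rewrite ?a0 ?b0 mul0r.
Qed.
Lemma gamma_det d (P : 'M[int]_2) : Gamma0 d P ->
  P ord0 ord0 * P ord_max ord_max - P ord0 ord_max * P ord_max ord0 = 1.
Proof. by case; rewrite {1}[P]mx22_eta det_mx22. Qed.

Lemma gamma_coprime d (P : 'M[int]_2) : Gamma0 d P ->
  coprimez (P ord_max ord0) (P ord_max ord_max).
Proof. by move/gamma_det/coprime_of_det. Qed.

Lemma TmulE (m : int) (P : 'M[int]_2) :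
  Tmat ^ m *m P = mx22 (P ord0 ord0 + m * P ord_max ord0) (P ord0 ord_max + m * P ord_max ord_max)
    (P ord_max ord0) (P ord_max ord_max).
Proof.
rewrite Tpow {1}[P]mx22_eta mul_mx22; congr mx22; ring.
Qed.

Lemma rep_exists d Rep (hRep : T_transversal d Rep) (c e : int) :
  coprimez c e -> (d%:Z %| c)%Z ->
  exists P, [/\ Rep P, P ord_max ord0 = c & P ord_max ord_max = e].
Proof.
move=> /coprimezP[[u v] /= huv] dc.
pose P0 := mx22 v (- u) c e.
have G0 : Gamma0 d P0.
  split; first by rewrite det_mx22; rewrite -huv; ring.
  by rewrite mxE.
have [Q [[RQ [m hm]] _]] := hRep.2 P0 G0.
exists Q; split => //.
- by have := congr1 (fun M : 'M[int]_2 => M ord_max ord0) hm; rewrite TmulE !mxE.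
- by have := congr1 (fun M : 'M[int]_2 => M ord_max ord_max) hm; rewrite TmulE !mxE.
Qed.

Lemma rep_uniq d Rep (hRep : T_transversal d Rep) (P P' : 'M[int]_2) :
  Rep P -> Rep P' -> P ord_max ord0 = P' ord_max ord0 ->
  P ord_max ord_max = P' ord_max ord_max -> P = P'.
Proof.
move=> RP RP' hc he.
have GP := hRep.1 _ RP; have GP' := hRep.1 _ RP'.
have [Q [_ uQ]] := hRep.2 P GP.
have e1 : Q = P.
  apply: uQ; split => //; exists 0.
  by rewrite TmulE !mul0r !addr0 -mx22_eta.
rewrite -e1; apply: uQ; split => //.
have H := gamma_det GP; have H' := gamma_det GP'.
move: H H'; rewrite -hc -he.
set a := P ord0 ord0; set b := P ord0 ord_max; set c := P ord_max ord0; set e := P ord_max ord_max.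
set a' := P' ord0 ord0; set b' := P' ord0 ord_max => H H'.
exists ((b - b') * a - (a - a') * b).
rewrite TmulE -hc -he {1}[P]mx22_eta -/a -/b -/c -/e -/a' -/b'; congr mx22.
- apply/eqP; rewrite -subr_eq0; apply/eqP.
  transitivity (a' * ((a * e - b * c) - 1) - a * ((a' * e - b' * c) - 1)); first by ring.
  by rewrite H H' subrr !mulr0 subrr.
- apply/eqP; rewrite -subr_eq0; apply/eqP.
  transitivity (b' * ((a * e - b * c) - 1) - b * ((a' * e - b' * c) - 1)); first by ring.
  by rewrite H H' subrr !mulr0 subrr.
Qed.

Definition Psi (dl : nat) (j q c e : int) : 'M[rat]_2 :=
  mx22 (j%:~R * c%:~R) (j%:~R * e%:~R) (q%:~R / dl%:R * c%:~R) (q%:~R / dl%:R * e%:~R).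

Lemma Phi_Psi dl d j p (P : 'M[int]_2) :
  Bmat dl d j p *m map_mx intr P = Psi dl j (d%:Z * p) (P ord_max ord0) (P ord_max ord_max).
Proof.
rewrite {1}[P]mx22_eta map_mx22 /Bmat mul_mx22 /Psi intrM.
congr mx22; rewrite /= ?mul0r ?add0r //; by rewrite -[(d%:Z)%:~R]/(d%:R) ; ring.
Qed.

Lemma Psi_neg dl j q c e : Psi dl (- j) (- q) (- c) (- e) = Psi dl j q c e.
Proof. by rewrite /Psi !intrN; congr mx22; ring. Qed.

Lemma intr_eq (x y : int) : (x%:~R : rat) = y%:~R -> x = y.
Proof. exact: intr_inj. Qed.

Lemma Psi_inj dl j q c e j' q' c' e' : (0 < dl)%N ->
  Psi dl j q c e = Psi dl j' q' c' e' ->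
  [/\ j * c = j' * c', j * e = j' * e', q * c = q' * c' & q * e = q' * e'].
Proof.
move=> dl0 h; have [h1 h2 h3 h4] := mx22_inj h.
have dn : (dl%:R : rat) != 0 by rewrite pnatr_eq0 -lt0n.
split; apply: intr_eq; rewrite !intrM //.
- apply: (mulIf (invr_neq0 dn)); by rewrite mulrAC h3 mulrAC.
- apply: (mulIf (invr_neq0 dn)); by rewrite mulrAC h4 mulrAC.
Qed.

Lemma delta_gt0 n (ds : 'I_n -> nat) (x : 'I_n -> nat) :
  (forall i, prime (ds i)) -> (0 < delta_of ds x)%N.
Proof.
move=> pr; rewrite /delta_of prodn_gt0 // => i; by rewrite expn_gt0 prime_gt0.
Qed.

Lemma coprime_delta n (ds : 'I_n -> nat) (x : 'I_n -> nat) (m : nat) :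
  (forall i, prime (ds i)) -> (forall i, ~~ (ds i %| m)%N) -> coprime (delta_of ds x) m.
Proof.
move=> pr nd; rewrite /delta_of; apply: (big_ind (fun k => coprime k m)).
- exact: coprime1n.
- by move=> a b ca cb; rewrite coprimeMl ca cb.
- by move=> i _; apply: coprimeXl; rewrite prime_coprime.
Qed.

Lemma dvd_delta n (ds : 'I_n -> nat) (x : 'I_n -> nat) i :
  (0 < x i)%N -> (ds i %| delta_of ds x)%N.
Proof.
move=> xi; rewrite /delta_of (bigD1 i) //=; apply: dvdn_mulr.
by rewrite -(prednK xi) expnS dvdn_mulr.
Qed.

Lemma dvdz_nat (d : nat) (q : int) : (d%:Z %| q)%Z = (d %| `|q|)%N.
Proof. by rewrite dvdzE. Qed.

Definition Img (dl d : nat) : set 'M[rat]_2 :=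
  [set A | exists j p c e : int, [/\ (j, p) != (0, 0), coprimez c e, (dl%:Z %| c)%Z &
       A = Psi dl j (d%:Z * p) c e]].

Lemma pair_nz (j p : int) : ((j, p) != (0, 0)) = (j != 0) || (p != 0).
Proof. by rewrite xpair_eqE negb_and. Qed.

Lemma Img_sub1 dl d : (0 < d)%N -> Img dl d `<=` Img dl 1.
Proof.
move=> d0 A [j [p [c [e [jp ce dc ->]]]]].
exists j, (d%:Z * p), c, e; split => //; last by rewrite mul1r.
move: jp; rewrite !pair_nz mulf_eq0 negb_or; case: (p == 0) => /=.
  by rewrite andbF !orbF.
move=> _; rewrite andbT orbC; apply/orP; left; lia.
Qed.

Lemma Img_dvd dl d j q c e : (0 < dl)%N -> (0 < d)%N ->
  (j != 0) || (q != 0) -> coprimez c e -> (dl%:Z %| c)%Z ->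
  (Img dl d (Psi dl j q c e) <-> (d%:Z %| q)%Z).
Proof.
move=> dl0 d0 jq ce dc; split.
  move=> [j' [p' [c' [e' [jp' ce' dc' h]]]]].
  have [h1 h2 h3 h4] := Psi_inj dl0 h.
  have [l [l1 _ _ _ hq]] := dec_uniq_int ce ce' jq h1 h2 h3 h4.
  have ll : l * l = 1 by case: l1 => ->.
  have -> : q = l * (d%:Z * p') by rewrite hq mulrA ll mul1r.
  by rewrite dvdz_mull // dvdz_mulr.
move=> dq; exists j, (q %/ d%:Z)%Z, c, e; split => //.
  rewrite pair_nz; move: jq; case: (j == 0) => //= q0.
  apply: contra q0 => /eqP q0'; by rewrite -(divzK dq) q0' mul0r.
by rewrite mulrC divzK.
Qed.

Lemma natrE (dl : nat) : ((dl%:Z)%:~R : rat) = dl%:R.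
Proof. by []. Qed.

Lemma lhs_dec n (ds : 'I_n -> nat) (x : 'I_n -> nat) (pr : forall i, prime (ds i)) A :
  lhs_set ds (delta_of ds x) A ->
  exists j q c e, [/\ (j != 0) || (q != 0), coprimez c e,
    ((delta_of ds x)%:Z %| c)%Z, A = Psi (delta_of ds x) j q c e &
    forall i, ~~ ((ds i)%:Z %| q)%Z].
Proof.
move=> [n1 [l1 [n2 [l2 [-> [Anz [det0 nd]]]]]]].
set dl := delta_of ds x.
have dl0 : (0 < dl)%N by exact: delta_gt0.
have dn : (dl%:R : rat) != 0 by rewrite pnatr_eq0 -lt0n.
have hdet : n1 * l2 = l1 * (dl%:Z * n2).
  apply: intr_eq; rewrite !intrM natrE.
  move: det0; rewrite /Mdelta_elt det_mx22 => /eqP; rewrite subr_eq0 => /eqP h.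
  transitivity (n1%:~R * (l2%:~R / dl%:R) * dl%:R : rat); first by field.
  by rewrite h; ring.
have nz : [|| n1 != 0, l1 != 0, dl%:Z * n2 != 0 | l2 != 0].
  move: Anz; apply: contraNT; rewrite !negb_or !negbK => /and4P[/eqP h1 /eqP h2 /eqP h3 /eqP h4].
  have h3' : n2 = 0 by move: h3 => /eqP; rewrite mulf_eq0 => /orP[|/eqP//]; lia.
  by rewrite /Mdelta_elt mx22_eq0 h1 h2 h3' h4 !mul0r !eqxx.
have [j [q [c [e [ce h1 h2 h3 h4]]]]] := rank1_int hdet nz.
exists j, q, c, e; split => //.
- move: nz; apply: contraLR; rewrite negb_or !negbK => /andP[/eqP j0 /eqP q0].
  by rewrite h1 h2 h3 h4 j0 q0 !mul0r !eqxx.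
- have cq : coprimez dl%:Z q.
    rewrite coprimezE /=; apply: coprime_delta => // i.
    by rewrite -dvdz_nat; apply: contra (nd i); rewrite h4 => H; apply: dvdz_mulr.
  by rewrite -(Gauss_dvdzr _ cq) -h3 dvdz_mulr.
- rewrite /Mdelta_elt /Psi; congr mx22; rewrite -?intrM -?h1 -?h2 //.
  + apply: (mulIf dn); rewrite [n2%:~R * _]mulrC -natrE -intrM h3 intrM natrE; by field.
  + by rewrite h4 intrM; field.
- by move=> i; apply: contra (nd i); rewrite h4 => H; apply: dvdz_mulr.
Qed.

Lemma Psi_nz dl j q c e : (j != 0) || (q != 0) -> coprimez c e -> (0 < dl)%N ->
  Psi dl j q c e != 0.
Proof.
move=> jq ce dl0; have dn : (dl%:R : rat) != 0 by rewrite pnatr_eq0 -lt0n.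
have cnz := coprime_nz ce.
rewrite /Psi mx22_eq0 !mulf_eq0 !intr_eq0.
have -> : (dl%:R^-1 == 0 :> rat) = false by rewrite invr_eq0 (negbTE dn).
rewrite !orbF.
by case/orP: jq => H; case/orP: cnz => H'; rewrite (negbTE H) (negbTE H') /= ?andbF.
Qed.

Lemma lhs_of_dec n (ds : 'I_n -> nat) (x : 'I_n -> nat) (pr : forall i, prime (ds i))
  (xpos : forall i, (0 < x i)%N) j q c e :
  (j != 0) || (q != 0) -> coprimez c e -> ((delta_of ds x)%:Z %| c)%Z ->
  (forall i, ~~ ((ds i)%:Z %| q)%Z) ->
  lhs_set ds (delta_of ds x) (Psi (delta_of ds x) j q c e).
Proof.
move=> jq ce dc nd.
set dl := delta_of ds x.
have dl0 : (0 < dl)%N by exact: delta_gt0.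
have dn : (dl%:R : rat) != 0 by rewrite pnatr_eq0 -lt0n.
exists (j * c), (j * e), (q * (c %/ dl%:Z)%Z), (q * e); split; last split.
- rewrite /Mdelta_elt /Psi; congr mx22; rewrite ?intrM //.
  + rewrite -{1}(divzK dc) intrM natrE; by field.
  + by field.
- exact: Psi_nz.
- split; first by rewrite /Psi det_mx22; ring.
  move=> i; rewrite dvdz_nat abszM Euclid_dvdM // negb_or -!dvdz_nat nd /=.
  have : coprime (ds i) `|e|.
    apply: (@coprime_dvdl _ `|c|); last by [].
    apply: dvdn_trans (dvd_delta ds (xpos i)) _; by rewrite -dvdz_nat.
  by rewrite prime_coprime // dvdz_nat.
Qed.

Lemma sum_boolT (R : numFieldType) (c : R) : \sum_(b \in [set: bool]) c = c *+ 2.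
Proof.
rewrite (fsbigD1 true) //; last exact: finite_finset.
have -> : [set: bool] `\ true = [set false].
  by apply/seteqP; split => [b [_ /= hb]|b /= ->] //=; case: b hb.
by rewrite fsbig_set1 mulr2n.
Qed.

Lemma sum_pairT (R : numFieldType) (T : choiceType) (X S : set T) (g : T -> R) :
  finite_set S -> (forall t, g t != 0 -> S t) ->
  \sum_(p \in X `*` [set: bool]) g p.1 = (\sum_(t \in X) g t) *+ 2.
Proof.
move=> Sfin gS.
have XSfin : finite_set (X `&` S) by apply: finite_setIr.
rewrite -(fsbig_widen (X `&` S) X); last 2 first.
- by move=> t [].
- move=> t [Xt /not_andP[//|nS]] /=; apply/eqP; apply: contra_notT nS; exact: gS.
rewrite -(fsbig_widen ((X `&` S) `*` [set: bool]) (X `*` [set: bool])); last 2 first.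
- by move=> [t b] [[Xt _] _].
- move=> [t b] [[Xt _] /not_andP[/not_andP[//|nS]|//]] /=; apply/eqP; apply: contra_notT nS; exact: gS.
transitivity (\sum_(t \in X `&` S) \sum_(b \in [set: bool]) g t).
  by rewrite pair_fsbig //; exact: finite_finset.
under [LHS]eq_fsbigr => t _ do rewrite sum_boolT.
by rewrite !fsbig_finite //= sumrMnl.
Qed.

Definition sgnb (c e : int) : bool := (0 < c) || ((c == 0) && (0 < e)).

Lemma sgnb_neg (c e : int) : (c != 0) || (e != 0) -> sgnb (- c) (- e) = ~~ sgnb c e.
Proof.
rewrite /sgnb !oppr_gt0 oppr_eq0.
by case: (ltrgt0P c) => hc; case: (ltrgt0P e) => he //=.
Qed.

Lemma G_eq n (ds : 'I_n -> nat) (x : 'I_n -> nat) (pr : forall i, prime (ds i))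
  (Rep : set 'M[int]_2) (hRep : T_transversal (delta_of ds x) Rep)
  (R : numFieldType) (f : 'M[rat]_2 -> R) (f_fin : finite_set [set A | f A != 0])
  (d : nat) : (0 < d)%N ->
  \sum_(y \in rhs_idx Rep) f (Bmat (delta_of ds x) d y.1.1 y.1.2 *m map_mx intr y.2) =
  (\sum_(A \in Img (delta_of ds x) d) f A) *+ 2.
Proof.
move=> d0.
set dl := delta_of ds x.
have dl0 : (0 < dl)%N by exact: delta_gt0.
pose h := fun y : int * int * 'M[int]_2 =>
  (Bmat dl d y.1.1 y.1.2 *m map_mx intr y.2, sgnb (y.2 ord_max ord0) (y.2 ord_max ord_max)).
have dz : d%:Z != 0 by lia.
transitivity (\sum_(y \in rhs_idx Rep) (fun p : 'M[rat]_2 * bool => f p.1) (h y)) => //.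
rewrite -(@fsbig_image _ _ _ _ _ (rhs_idx Rep) h (fun p : 'M[rat]_2 * bool => f p.1)); last first.
  move=> [[j p] P] [[j' p'] P'] /set_mem [/= jp RP] /set_mem [/= jp' RP'].
  rewrite /h /= !Phi_Psi => -[e1 e2].
  have [h1 h2 h3 h4] := Psi_inj dl0 e1.
  have GP := hRep.1 _ RP; have GP' := hRep.1 _ RP'.
  have jq : (j != 0) || (d%:Z * p != 0).
    by move: jp; rewrite pair_nz mulf_eq0 negb_or dz.
  have [l [l1 hc he hj hq]] := dec_uniq_int (gamma_coprime GP) (gamma_coprime GP') jq h1 h2 h3 h4.
  case: l1 => l1; subst l.
    rewrite !mul1r in hc he hj hq.
    have hp : p' = p by apply: (mulfI dz).
    by rewrite hj hp (rep_uniq hRep RP RP').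
  move: e2; rewrite hc he !mulN1r sgnb_neg; last exact: (coprime_nz (gamma_coprime GP)).
  by case: (sgnb _ _).
have -> : h @` rhs_idx Rep = Img dl d `*` [set: bool].
  apply/seteqP; split.
    move=> _ [[[j p] P] [/= jp RP] <-]; split => //=.
    rewrite Phi_Psi; exists j, p, (P ord_max ord0), (P ord_max ord_max); split => //.
    - exact: (gamma_coprime (hRep.1 _ RP)).
    - by case: (hRep.1 _ RP).
  move=> [A b] [/= [j [p [c [e [jp ce dc ->]]]]] _].
  have [hb|hb] := boolP (sgnb c e == b).
    have [P [RP hc he]] := rep_exists hRep ce dc.
    exists ((j, p), P) => //; rewrite /h /= Phi_Psi hc he (eqP hb) //.
  have ce' : coprimez (- c) (- e) by rewrite coprimeNz coprimezN.
  have dc' : (dl%:Z %| - c)%Z by rewrite dvdzE abszN -dvdzE.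
  have [P [RP hc he]] := rep_exists hRep ce' dc'.
  exists ((- j, - p), P).
    split => //=; move: jp; rewrite !pair_nz !oppr_eq0 //.
  rewrite /h /= Phi_Psi hc he sgnb_neg; last exact: coprime_nz ce.
  rewrite mulrN Psi_neg; congr pair.
  by move: hb; case: (sgnb c e); case: b.
exact: (@sum_pairT R _ (Img dl d) _ f f_fin (fun t ft => ft)).
Qed.

Definition prodI n (ds : 'I_n -> nat) (I : {set 'I_n}) : nat := (\prod_(i in I) ds i)%N.

Lemma prodI_gt0 n (ds : 'I_n -> nat) I : (forall i, prime (ds i)) -> (0 < prodI ds I)%N.
Proof. by move=> pr; rewrite /prodI prodn_gt0 // => i; rewrite prime_gt0. Qed.

Lemma coprime_prod_list n (ds : 'I_n -> nat) (pr : forall i, prime (ds i))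
  (dinj : injective ds) a (s : seq 'I_n) :
  a \notin s -> coprime (ds a) (\prod_(i <- s) ds i).
Proof.
move=> as_; rewrite big_seq; apply: (big_ind (fun k => coprime (ds a) k)).
- exact: coprimen1.
- by move=> u v cu cv; rewrite coprimeMr cu cv.
- move=> i si; rewrite prime_coprime // dvdn_prime2 //; apply/eqP => /dinj ai.
  by move: as_; rewrite ai si.
Qed.

Lemma dvd_prod_list n (ds : 'I_n -> nat) (pr : forall i, prime (ds i))
  (dinj : injective ds) (s : seq 'I_n) (m : nat) : uniq s ->
  (\prod_(i <- s) ds i %| m)%N = \big[andb/true]_(i <- s) (ds i %| m)%N.
Proof.
elim: s => [|a s IH] /=; first by rewrite !big_nil dvd1n.
move=> /andP[as_ us]; rewrite !big_cons Gauss_dvd ?IH //.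
exact: coprime_prod_list.
Qed.

Lemma dvd_prodI n (ds : 'I_n -> nat) (pr : forall i, prime (ds i))
  (dinj : injective ds) (I : {set 'I_n}) (m : nat) :
  (prodI ds I %| m)%N = \big[andb/true]_(i in I) (ds i %| m)%N.
Proof.
by rewrite /prodI -!big_enum /= dvd_prod_list // enum_uniq.
Qed.

Lemma mem_prodI n (ds : 'I_n -> nat) (pr : forall i, prime (ds i))
  (dinj : injective ds) (I : {set 'I_n}) i : (ds i %| prodI ds I)%N = (i \in I).
Proof.
have [iI|iI] := boolP (i \in I).
  by rewrite /prodI (bigD1 i) //= dvdn_mulr.
apply/negbTE; rewrite /prodI -big_enum /= -prime_coprime //.
by apply: coprime_prod_list => //; rewrite mem_enum.
Qed.

Lemma prodI_inj n (ds : 'I_n -> nat) (pr : forall i, prime (ds i))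
  (dinj : injective ds) : injective (prodI ds).
Proof.
move=> I J e; apply/setP => i.
by rewrite -(mem_prodI pr dinj) e (mem_prodI pr dinj).
Qed.

Lemma natr_bigand (R : numFieldType) (I : finType) (P : pred I) (c : I -> bool) :
  ((\big[andb/true]_(i | P i) c i : bool)%:R : R) = \prod_(i | P i) ((c i)%:R : R).
Proof.
apply: (big_morph (fun b : bool => (b%:R : R))) => //.
by move=> u v /=; rewrite -natrM mulnb.
Qed.

Lemma incl_excl (R : numFieldType) n (b : 'I_n -> bool) :
  \sum_(I : {set 'I_n}) (-1) ^+ #|I| * ((\big[andb/true]_(i in I) b i : bool)%:R : R) =
  ((\big[andb/true]_i ~~ b i : bool)%:R : R).
Proof.
rewrite natr_bigand.
have -> : \prod_i ((~~ b i : bool)%:R : R) = \prod_i (- ((b i)%:R) + 1).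
  by apply: eq_bigr => i _; case: (b i); rewrite /= ?addNr ?oppr0 ?add0r.
rewrite bigA_distr; apply: eq_bigr => J _.
rewrite -big_mkcond /= natr_bigand.
by rewrite (@prodrN R _ (mem J) (fun i => ((b i)%:R : R))).
Qed.

Lemma card_le n (I : {set 'I_n}) : (#|I| < n.+1)%N.
Proof. by rewrite ltnS; apply: leq_trans (max_card _) _; rewrite card_ord. Qed.

Lemma sum_by_card (R : numFieldType) n (g : {set 'I_n} -> R) :
  \sum_(l < n.+1) (-1) ^+ l * \sum_(I : {set 'I_n} | #|I| == l) g I =
  \sum_(I : {set 'I_n}) (-1) ^+ #|I| * g I.
Proof.
pose p := fun X : {set 'I_n} => (inord #|X| : 'I_n.+1).
rewrite (partition_big p predT) //=.
apply: eq_bigr => l _; rewrite big_distrr /=; apply: eq_big => I.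
  rewrite /p; apply/eqP/eqP => [e|e].
    by apply: val_inj; rewrite /= -e; apply/inordK; apply: card_le.
  by rewrite -e; apply/esym/inordK; apply: card_le.
by move=> /eqP ->.
Qed.

Lemma if_mul (R : numFieldType) (b : bool) (a : R) : (if b then a else 0) = a * (b%:R).
Proof. by case: b; rewrite ?mulr1 ?mulr0. Qed.

Lemma key n (ds : 'I_n -> nat) (x : 'I_n -> nat) (pr : forall i, prime (ds i))
  (dinj : injective ds) (xpos : forall i, (0 < x i)%N) (R : numFieldType) (a : R) A :
  \sum_(I : {set 'I_n}) (-1) ^+ #|I| *
     (if A \in Img (delta_of ds x) (prodI ds I) then a else 0) =
  (if A \in lhs_set ds (delta_of ds x) then a else 0).
Proof.
set dl := delta_of ds x.
have dl0 : (0 < dl)%N by exact: delta_gt0.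
have [[j [p [c [e [jp ce dc ->]]]]]|nI] := pselect (Img dl 1 A).
  rewrite mul1r.
  have jq : (j != 0) || (p != 0) by rewrite -pair_nz.
  have hI : forall I, (Psi dl j p c e \in Img dl (prodI ds I)) = (prodI ds I %| `|p|)%N.
    move=> I; apply/idP/idP => [/set_mem H|H].
      by rewrite -dvdz_nat; apply/(Img_dvd dl0 (prodI_gt0 I pr) jq ce dc).
    by apply/mem_set; apply/(Img_dvd dl0 (prodI_gt0 I pr) jq ce dc); rewrite dvdz_nat.
  have hL : (Psi dl j p c e \in lhs_set ds dl) = \big[andb/true]_i ~~ (ds i %| `|p|)%N.
    rewrite big_andE; apply/idP/idP => [/set_mem H|/forallP H]; first apply/forallP => i.
      have [j' [q' [c' [e' [jq' ce' dc' E nd]]]]] := lhs_dec pr H.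
      have [h1 h2 h3 h4] := Psi_inj dl0 E.
      have [l [l1 _ _ _ hq]] := dec_uniq_int ce ce' jq h1 h2 h3 h4.
      have : ~~ (ds i %| `|(l * p)%R|)%N by rewrite -hq; exact: (nd i).
      rewrite abszM.
      by case: l1 => ->; rewrite /= mul1n.
    apply/mem_set; apply: lhs_of_dec => // i.
  under eq_bigr => I _ do rewrite hI if_mul mulrCA.
  by rewrite -big_distrr /= hL if_mul; under eq_bigr => I _ do rewrite dvd_prodI //; rewrite incl_excl.
rewrite big1; last first.
  move=> I _; case: ifP; rewrite ?mulr0 // => /set_mem H.
  by exfalso; apply: nI; apply: (Img_sub1 (prodI_gt0 I pr)).
case: ifP => // /set_mem H; exfalso; apply: nI.
have [j [q [c [e [jq ce dc E nd]]]]] := lhs_dec pr H.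
by exists j, q, c, e; split; rewrite ?pair_nz ?mul1r.
Qed.

Lemma fsum_on (R : numFieldType) (T : choiceType) (X S : set T) (g : T -> R) :
  finite_set S -> (forall t, g t != 0 -> S t) ->
  \sum_(t \in X) g t = \sum_(t <- fset_set S) (if t \in X then g t else 0).
Proof.
move=> Sfin gS.
rewrite fsbig_mkcond -(fsbig_widen S setT) //; last first.
  move=> t [_ nS] /=; rewrite /patch; case: ifP => // _.
  by apply/eqP; apply: contra_notT nS; exact: gS.
by rewrite fsbig_finite.
Qed.

Lemma fsum_fin (R : numFieldType) (T : finType) (P : set T) (H : T -> R) :
  \sum_(i \in P) H i = \sum_(i | `[< P i >]) H i.
Proof.
have -> : P = [set` (fun i => `[< P i >]) : pred T].
  by apply/seteqP; split => i /=; rewrite /= ?asboolE.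
rewrite -(bigfs _ (enum_uniq T)); last by move=> i _; rewrite mem_enum.
rewrite big_enum_cond; apply: eq_bigl => i /=.
by apply/asboolP/asboolP => /asboolP.
Qed.

Lemma Cl_sum n (ds : 'I_n -> nat) (pr : forall i, prime (ds i)) (dinj : injective ds)
  (R : numFieldType) l (K : nat -> R) :
  \sum_(d \in Cl ds l) K d = \sum_(I : {set 'I_n} | #|I| == l) K (prodI ds I).
Proof.
have -> : Cl ds l = prodI ds @` [set I : {set 'I_n} | #|I| = l].
  apply/seteqP; split.
    by move=> d [I [cI ->]]; exists I.
  by move=> d [I cI <-]; exists I.
rewrite fsbig_image; last by move=> I J _ _; apply: prodI_inj.
rewrite fsum_fin; apply: eq_bigl => I.
by apply/asboolP/eqP.
Qed.

Unset Implicit Arguments.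

Theorem lemma4p6 (n : nat) (ds : 'I_n -> nat) (x : 'I_n -> nat)
  (ds_prime : forall i, prime (ds i)) (ds_inj : injective ds)
  (x_pos : forall i, (0 < x i)%N)
  (Rep : set 'M[int]_2) (hRep : T_transversal (delta_of ds x) Rep)
  (R : numFieldType) (f : 'M[rat]_2 -> R)
  (f_fin : finite_set [set A | f A != 0]) :
  let delta := delta_of ds x in
  \sum_(A \in lhs_set ds delta) f A =
  2^-1 * \sum_(l < n.+1) (-1) ^+ l *
     \sum_(d \in Cl ds l)
        \sum_(y \in rhs_idx Rep) f (Bmat delta d y.1.1 y.1.2 *m map_mx intr y.2).
Proof.
move=> dl.
have fS : forall t, f t != 0 -> [set A | f A != 0] t by [].
set s := fset_set [set A | f A != 0].
under [X in _ = _ * X]eq_bigr => l _.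
  rewrite (Cl_sum ds_prime ds_inj l (fun d => \sum_(y \in rhs_idx Rep) f (Bmat dl d y.1.1 y.1.2 *m map_mx intr y.2))).
  under eq_bigr => I _ do rewrite (G_eq ds_prime hRep f_fin (prodI_gt0 I ds_prime)) (fsum_on _ f_fin fS).
  over.
rewrite [LHS](fsum_on _ f_fin fS).
under [X in _ = _ * X]eq_bigr => l _ do rewrite sumrMnl mulrnAr.
rewrite sumrMnl -[X in _ * X]mulr_natr mulrCA mulVf ?mulr1; last by rewrite pnatr_eq0.
under [RHS]eq_bigr => l _ do rewrite exchange_big big_distrr /=.
rewrite [RHS]exchange_big /=; apply: eq_bigr => A _.
rewrite sum_by_card.
by rewrite (key ds_prime ds_inj x_pos).
Qed.
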